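(* If a square matrix $A$ has a principal submatrix $A[\kappa]$ that is a Hurwitz-unstable $P^-_{FF}$ matrix, then $A$ is $D$-Hopf.
   Context: Hurwitz-unstable: at least one eigenvalue with positive real part. $P^-_0$ matrix: every nonzero $k\times k$ principal minor has sign $(-1)^k$. An $n\times n$ $P^-_0$ matrix $A$ is a $P^-_{FF}$ (Fisher–Fuller) matrix if there is a nested sequence of invertible principal submatrices $A[\kappa_1],\dots,A[\kappa_n]$ with $|\kappa_i|=i$ and $\kappa_{i-1}\subset\kappa_i$. Inertia: numbers of eigenvalues with negative, positive, zero real part. $A$ is $D$-Hopf if there exist an invertible $k\times k$ principal submatrix $A[\kappa]$ and positive diagonal $D_1,D_2$ with $\operatorname{inertia}(A[\kappa]D_1)\ne\operatorname{inertia}(A[\kappa]D_2)$. *)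

(* Defs.v *)
From HB Require Import structures.
From mathcomp Require Import all_boot all_order all_algebra.
From mathcomp.real_closed Require Import complex.
Set Implicit Arguments. Unset Strict Implicit. Unset Printing Implicit Defensive.
Import Order.TTheory GRing.Theory Num.Theory.
Local Open Scope ring_scope.

Section Defs.
Variable R : rcfType.


(* Principal submatrix A[kappa]: rows and columns indexed by kappa,
   in increasing order (enum of a set over 'I_n is increasing). *)
Definition psub m (A : 'M[R]_m) (kappa : {set 'I_m}) : 'M[R]_#|kappa| :=
  \matrix_(i, j) A (enum_val i) (enum_val j).

Definition cmx m (A : 'M[R]_m) : 'M[R[i]]_m := map_mx (fun x => (x%:C)%C) A.

Definition hurwitz_unstable m (A : 'M[R]_m) : Prop :=
  exists z : R[i], eigenvalue (cmx A) z /\ 0 < complex.Re z.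

Definition P0minus m (A : 'M[R]_m) : Prop :=
  forall K : {set 'I_m}, \det (psub A K) != 0 ->
    Num.sg (\det (psub A K)) = (-1) ^+ #|K|.

Definition PFFminus m (A : 'M[R]_m) : Prop :=
  P0minus A /\
  exists kap : nat -> {set 'I_m},
    (forall k, (1 <= k <= m)%N -> #|kap k| = k /\ \det (psub A (kap k)) != 0) /\
    (forall k, (2 <= k <= m)%N -> kap k.-1 \subset kap k).

(* Eigenvalues (with algebraic multiplicity) of a complex matrix. *)
Definition eigseq m (M : 'M[R[i]]_m) : seq R[i] :=
  sval (closed_field_poly_normal (char_poly M)).

Definition inertia m (A : 'M[R]_m) : nat * nat * nat :=
  let s := eigseq (cmx A) in
  (count (fun z => complex.Re z < 0) s,
   count (fun z => 0 < complex.Re z) s,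
   count (fun z => complex.Re z == 0) s).

Definition DHopf n (A : 'M[R]_n) : Prop :=
  exists kappa : {set 'I_n},
    \det (psub A kappa) != 0 /\
    exists d1 d2 : 'rV[R]_#|kappa|,
      (forall i, 0 < d1 0 i) /\ (forall i, 0 < d2 0 i) /\
      inertia (psub A kappa *m diag_mx d1) <> inertia (psub A kappa *m diag_mx d2).
End Defs.

(* Main.v *)
Require Import Defs.
From HB Require Import structures.
From mathcomp Require Import all_boot all_order all_algebra.
From mathcomp.real_closed Require Import complex.
From mathcomp Require Import ring lra.
From mathcomp Require Import fingroup perm.
Import Order.TTheory GRing.Theory Num.Theory.
Local Open Scope ring_scope.

Set Implicit Arguments. Unset Strict Implicit. Unset Printing Implicit Defensive.

Definition lin (R : rcfType) m (S : {set 'I_m}) (v y : 'I_m -> R) : R :=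
  \sum_(i in S) v i * y i.
Definition nrm (R : rcfType) m (S : {set 'I_m}) (y : 'I_m -> R) : R :=
  \sum_(i in S) y i ^+ 2.
Definition Mv (R : rcfType) m (B : 'M[R]_m) (S : {set 'I_m}) (d y : 'I_m -> R) :=
  fun i => \sum_(l in S) B i l * d l * y l.
Definition Phi (R : rcfType) m (S : {set 'I_m}) r (L : nat -> 'I_m -> R) y :=
  \sum_(k < r) lin S (L k) y ^+ 2.
Definition Bil (R : rcfType) m (S : {set 'I_m}) r (L : nat -> 'I_m -> R) x y :=
  \sum_(k < r) lin S (L k) x * lin S (L k) y.
Definition Cert (R : rcfType) m (B : 'M[R]_m) (S : {set 'I_m}) :=
  exists (d : 'I_m -> R) (r : nat) (L : nat -> 'I_m -> R) (al : R),
    0 < al /\ (forall l, l \in S -> 0 < d l) /\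
    (forall y, al * nrm S y <= Phi S r L y) /\
    (forall y, Bil S r L y (Mv B S d y) <= - (al * nrm S y)).

Lemma lin_comb (R : rcfType) m (S : {set 'I_m}) v y w p q :
  lin S v (fun i => p * y i + q * w i) = p * lin S v y + q * lin (R:=R) S v w.
Proof.
rewrite /lin !mulr_sumr -big_split /=; apply: eq_bigr => i _; ring.
Qed.

Lemma lin_eq (R : rcfType) m (S : {set 'I_m}) v (x x' : 'I_m -> R) :
  (forall i, i \in S -> x i = x' i) -> lin S v x = lin S v x'.
Proof. by move=> H; apply: eq_bigr => i /H ->. Qed.

Lemma lin_eqv (R : rcfType) m (S : {set 'I_m}) (v v' x : 'I_m -> R) :
  (forall i, i \in S -> v i = v' i) -> lin S v x = lin S v' x.
Proof. by move=> H; apply: eq_bigr => i /H ->. Qed.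

Lemma Bil_eq (R : rcfType) m (S : {set 'I_m}) r L (x y y' : 'I_m -> R) :
  (forall i, i \in S -> y i = y' i) -> Bil S r L x y = Bil S r L x y'.
Proof. by move=> H; apply: eq_bigr => k _; rewrite (lin_eq _ H). Qed.

Lemma Bil_comb (R : rcfType) m (S : {set 'I_m}) r L (x y w : 'I_m -> R) p q :
  Bil S r L x (fun i => p * y i + q * w i) = p * Bil S r L x y + q * Bil S r L x w.
Proof.
rewrite /Bil !mulr_sumr -big_split /=; apply: eq_bigr => k _.
rewrite lin_comb; ring.
Qed.

Lemma Bil_sym (R : rcfType) m (S : {set 'I_m}) r L (x y : 'I_m -> R) :
  Bil S r L x y = Bil S r L y x.
Proof. by apply: eq_bigr => k _; rewrite mulrC. Qed.

Lemma Bil_Phi (R : rcfType) m (S : {set 'I_m}) r L (x : 'I_m -> R) :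
  Bil S r L x x = Phi S r L x.
Proof. by apply: eq_bigr => k _; rewrite expr2. Qed.

Lemma nrm_ge0 (R : rcfType) m (S : {set 'I_m}) (y : 'I_m -> R) : 0 <= nrm S y.
Proof. by apply: sumr_ge0 => i _; apply: sqr_ge0. Qed.

Lemma sum_sq_bound (R : rcfType) m (S : {set 'I_m}) (a : 'I_m -> R) :
  (\sum_(i in S) a i) ^+ 2 <= #|S|%:R * \sum_(i in S) a i ^+ 2.
Proof.
rewrite expr2 mulr_suml.
have E : forall i j, a i * a j <= (a i ^+ 2 + a j ^+ 2) / 2.
  move=> i j; have := sqr_ge0 (a i - a j); lra.
apply: (@le_trans _ _ (\sum_(i in S) \sum_(j in S) (a i ^+ 2 + a j ^+ 2) / 2)).
  by apply: ler_sum => i _; rewrite mulr_sumr; apply: ler_sum => j _; apply: E.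
rewrite (eq_bigr (fun i => (#|S|%:R * a i ^+ 2 + \sum_(j in S) a j ^+ 2) / 2)).
  rewrite -mulr_suml big_split /= -mulr_sumr sumr_const -mulr_natl.
  set Q := \sum_(i in S) _; lra.
move=> i _; by rewrite -mulr_suml big_split /= sumr_const mulr_natl.
Qed.

Lemma lin_bound (R : rcfType) m (S : {set 'I_m}) (v : 'I_m -> R) :
  exists C, 0 <= C /\ forall y, lin S v y ^+ 2 <= C * nrm S y.
Proof.
exists (#|S|%:R * \sum_(i in S) v i ^+ 2); split.
  by apply: mulr_ge0 => //; apply: sumr_ge0 => i _; apply: sqr_ge0.
move=> y; apply: (le_trans (sum_sq_bound _ _)).
rewrite -mulrA ler_wpM2l // /nrm mulr_sumr; apply: ler_sum => i Hi.
rewrite exprMn; apply: ler_wpM2r; first exact: sqr_ge0.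
rewrite (bigD1 i) //= lerDl; apply: sumr_ge0 => j _; apply: sqr_ge0.
Qed.
Lemma fin_ineq (R:rcfType) (al s CK CG H E dl X be al' a P Psi Kv Gv t Nz : R) :
 0 < al -> s < 0 -> 0 <= CK -> 0 <= CG -> 0 <= H ->
 E = (CG + CK)/2 + (2*(s^+2*CK+CG))/(2*(-s)) ->
 dl = al/(2*E+2) -> X = dl^+3 * (-s) / (2*(1+dl*(-s))) ->
 be = X/(1+2*dl^+2*H) -> al' = Num.min (al/4) be ->
 0 <= a -> al * a <= P -> Psi <= - (al*a) -> Kv^+2 <= CK*a -> Gv^+2 <= CG*a ->
 Nz <= 2*a + 2*dl^+2*t^+2*H ->
 (al' * (t^+2 + Nz) <= P + (dl*t)^+2) /\
 (Psi + dl*(dl*s*t + Gv)*Kv + (dl*t)*(dl*(dl*s*t+Gv)) <= - (al' * (t^+2+Nz))).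
Proof.
move=> al0 s0 CK0 CG0 H0 dE dlE XE beE al'E a0 HP HPsi HK HG HN.
set sg := - s. have sg0 : 0 < sg by rewrite /sg; lra.
have sgE : sg = - s by []. clearbody sg. rewrite -sgE in dE XE.
have E0 : 0 <= E.
  rewrite dE; apply: addr_ge0; first by apply: divr_ge0; lra.
  apply: divr_ge0; last by lra.
  apply: mulr_ge0 => //; apply: addr_ge0 => //; apply: mulr_ge0 => //; apply: sqr_ge0.
have dl0 : 0 < dl by rewrite dlE; apply: divr_gt0; lra.
have ne1 : 2 * E + 2 != 0 by apply: lt0r_neq0; lra.
have dlE2 : dl * (2 * E + 2) = al by rewrite dlE; field; apply: lt0r_neq0; nra.
have dlEb : dl * E <= al / 2 by nra.
have X0 : 0 < X.
  by rewrite XE; apply: divr_gt0; [apply: mulr_gt0; [apply: exprn_gt0|]; lra|nra].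
have ne2 : 2 * (1 + dl * sg) != 0 by apply: lt0r_neq0; nra.
have XE2 : X * (2 * (1 + dl * sg)) = dl ^+ 3 * sg by rewrite XE; field; apply: lt0r_neq0; nra.
have XL1 : X <= dl ^+ 2 / 2.
  have : 0 <= dl ^+ 2 * (dl * sg) by apply: mulr_ge0; [apply: sqr_ge0|nra].
  rewrite exprSr in XE2; nra.
have XL2 : X <= dl ^+ 3 * sg / 2.
  have : 0 <= X * (dl * sg) by nra.
  nra.
have D0 : 0 < 1 + 2 * dl ^+ 2 * H.
  have : 0 <= dl ^+ 2 * H by apply: mulr_ge0 => //; apply: sqr_ge0.
  lra.
have be0 : 0 < be by rewrite beE; apply: divr_gt0.
have ne3 : 1 + 2 * dl ^+ 2 * H != 0 by apply: lt0r_neq0.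
have beE2 : be * (1 + 2 * dl ^+ 2 * H) = X by rewrite beE; field.
have al'1 : al' <= al / 4 by rewrite al'E ge_min lexx.
have al'2 : al' <= be by rewrite al'E ge_min lexx orbT.
have al'0 : 0 < al' by rewrite al'E lt_min; apply/andP; split => //; lra.
have t2 : 0 <= t ^+ 2 by apply: sqr_ge0.
have KEY : al' * (t ^+ 2 + Nz) <= al / 2 * a + X * t ^+ 2.
  have p1 : 0 <= (al / 4 - al') * a by apply: mulr_ge0; lra.
  have p2 : 0 <= (be - al') * ((1 + 2 * dl ^+ 2 * H) * t ^+ 2).
    by apply: mulr_ge0; [lra | apply: mulr_ge0; lra].
  have p3 : 0 <= al' * (2 * a + 2 * dl ^+ 2 * t ^+ 2 * H - Nz) by apply: mulr_ge0; lra.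
  have e : X * t ^+ 2 = be * (1 + 2 * dl ^+ 2 * H) * t ^+ 2 by rewrite beE2.
  rewrite e; nra.
split.
  have q1 : X * t ^+ 2 <= dl ^+ 2 / 2 * t ^+ 2 by apply: ler_wpM2r.
  have q2 : 0 <= al * a by apply: mulr_ge0; lra.
  have e : (dl * t) ^+ 2 = dl ^+ 2 * t ^+ 2 by rewrite exprMn.
  have q3 : 0 <= dl ^+ 2 * t ^+ 2 by apply: mulr_ge0 => //; apply: sqr_ge0.
  rewrite e; lra.
have b1 : dl * (Gv * Kv) <= dl * ((CG + CK) / 2 * a).
  apply: ler_wpM2l; first lra.
  have := sqr_ge0 (Gv - Kv); nra.
set W := s * Kv + Gv.
have HW : W ^+ 2 <= 2 * (s ^+ 2 * CK + CG) * a.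
  have := sqr_ge0 (s * Kv - Gv).
  have : s ^+ 2 * Kv ^+ 2 <= s ^+ 2 * (CK * a) by apply: ler_wpM2l => //; apply: sqr_ge0.
  rewrite /W; nra.
have b2 : dl ^+ 2 * t * W <= dl ^+ 3 * sg * t ^+ 2 / 2 + dl * W ^+ 2 / (2 * sg).
  have := sqr_ge0 (sg * dl * t - W).
  move=> hq.
  have : 0 <= dl / (2 * sg) * (sg * dl * t - W) ^+ 2 by apply: mulr_ge0 => //; apply: divr_ge0; lra.
  have -> : dl / (2 * sg) * (sg * dl * t - W) ^+ 2 =
     dl ^+ 3 * sg * t ^+ 2 / 2 + dl * W ^+ 2 / (2 * sg) - dl ^+ 2 * t * W.
    have ne4 : sg != 0 by apply: lt0r_neq0.
    by field.
  lra.
have b3 : dl * W ^+ 2 / (2 * sg) <= dl * (2 * (s ^+ 2 * CK + CG) / (2 * sg) * a).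
  have b3a : W ^+ 2 / (2 * sg) <= 2 * (s ^+ 2 * CK + CG) * a / (2 * sg).
    by apply: ler_wpM2r => //; rewrite invr_ge0; lra.
  have e1 : 2 * (s ^+ 2 * CK + CG) / (2 * sg) * a = 2 * (s ^+ 2 * CK + CG) * a / (2 * sg) by ring.
  rewrite e1 -mulrA; apply: ler_wpM2l => //; lra.
have eE : dl * ((CG + CK) / 2 * a) + dl * (2 * (s ^+ 2 * CK + CG) / (2 * sg) * a) = dl * E * a.
  have ne4 : sg != 0 by apply: lt0r_neq0.
  by rewrite dE; field.
have b4 : dl * E * a <= al / 2 * a by apply: ler_wpM2r.
have eL : Psi + dl * (dl * s * t + Gv) * Kv + dl * t * (dl * (dl * s * t + Gv)) =
   Psi + dl * (Gv * Kv) + dl ^+ 2 * t * W - dl ^+ 3 * sg * t ^+ 2.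
  by rewrite /W sgE; ring.
rewrite eL.
have : X * t ^+ 2 <= dl ^+ 3 * sg / 2 * t ^+ 2 by apply: ler_wpM2r.
lra.
Qed.

Lemma lin_setU1 (R : rcfType) m (S : {set 'I_m}) j (v y : 'I_m -> R) :
  j \notin S -> lin (j |: S) v y = v j * y j + lin S v y.
Proof. by move=> jS; rewrite /lin big_setU1. Qed.

Lemma nrm_setU1 (R : rcfType) m (S : {set 'I_m}) j (y : 'I_m -> R) :
  j \notin S -> nrm (j |: S) y = y j ^+ 2 + nrm S y.
Proof. by move=> jS; rewrite /nrm big_setU1. Qed.

Lemma cert_step (R : rcfType) m (B : 'M[R]_m) (S : {set 'I_m}) j (c : 'I_m -> R) :
  j \notin S ->
  (forall i, i \in S -> \sum_(l in S) B i l * c l = B i j) ->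
  B j j - \sum_(l in S) B j l * c l < 0 ->
  Cert B S -> Cert B (j |: S).
Proof.
move=> jS Hc Hs [d [r [L [al [al0 [dpos [HP HPsi]]]]]]].
have ijS : forall i, i \in S -> (i == j) = false.
  by move=> i Hi; apply/eqP => e; rewrite -e Hi in jS.
pose h := fun l => c l / d l.
have Hh : forall i, \sum_(l in S) B i l * d l * h l = \sum_(l in S) B i l * c l.
  move=> i; apply: eq_bigr => l Hl; rewrite /h.
  have := dpos l Hl => Hd; field; exact: lt0r_neq0.
pose kap := fun i => \sum_(k < r) L k i * lin S (L k) h.
have HK : forall x, Bil S r L x h = lin S kap x.
  move=> x; rewrite /Bil /lin /kap.
  under [RHS]eq_bigr do rewrite mulr_suml.
  rewrite exchange_big /=; apply: eq_bigr => k _; rewrite mulr_suml.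
  by apply: eq_bigr => i _; rewrite /lin mulrAC.
pose g := fun l => B j l * d l.
have [CK [CK0 HCK]] := lin_bound S kap.
have [CG [CG0 HCG]] := lin_bound S g.
pose s := B j j - \sum_(l in S) B j l * c l.
pose H := nrm S h.
pose E := (CG + CK)/2 + (2*(s^+2*CK+CG))/(2*(-s)).
pose dl := al/(2*E+2).
pose X := dl^+3 * (-s) / (2*(1+dl*(-s))).
pose be := X/(1+2*dl^+2*H).
pose al' := Num.min (al/4) be.
have dl0 : 0 < dl.
  have E0 : 0 <= E.
    rewrite /E; apply: addr_ge0; first by apply: divr_ge0; lra.
    apply: divr_ge0; last by rewrite /s; lra.
    apply: mulr_ge0 => //; apply: addr_ge0 => //; apply: mulr_ge0 => //; apply: sqr_ge0.
  by rewrite /dl; apply: divr_gt0; lra.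
pose d' := fun l => if l == j then dl else d l.
pose L' := fun k => if (k < r)%N then (fun i => if i == j then dl * lin S (L k) h else L k i)
                    else (fun i => if i == j then dl else 0).
have F1 : forall z (k : 'I_r), lin (j |: S) (L' k) z =
    lin S (L k) (fun i => 1 * z i + (dl * z j) * h i).
  move=> z k; rewrite lin_setU1 // lin_comb /L' ltn_ord eqxx.
  rewrite (lin_eqv _ (v' := L k)); first ring.
  by move=> i Hi; rewrite ijS.
have F2 : forall z, lin (j |: S) (L' r) z = dl * z j.
  move=> z; rewrite lin_setU1 // /L' ltnn eqxx.
  rewrite (lin_eqv _ (v' := fun _ => 0)); last by move=> i Hi; rewrite ijS.
  by rewrite /lin big1 ?addr0 // => i _; rewrite mul0r.
have HPhi : forall z, Phi (j |: S) r.+1 L' z =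
    Phi S r L (fun i => 1 * z i + (dl * z j) * h i) + (dl * z j) ^+ 2.
  move=> z; rewrite /Phi big_ord_recr /= F2; congr (_ + _).
  by apply: eq_bigr => k _; rewrite F1.
have HBil : forall z w, Bil (j |: S) r.+1 L' z w =
    Bil S r L (fun i => 1 * z i + (dl * z j) * h i) (fun i => 1 * w i + (dl * w j) * h i)
    + (dl * z j) * (dl * w j).
  move=> z w; rewrite /Bil big_ord_recr /= !F2; congr (_ + _).
  by apply: eq_bigr => k _; rewrite !F1.
exists d', r.+1, L', al'; split.
  rewrite /al' lt_min; apply/andP; split; first lra.
  rewrite /be /X; apply: divr_gt0; last first.
    have : 0 <= dl ^+ 2 * H by apply: mulr_ge0; [apply: sqr_ge0|apply: nrm_ge0].
    lra.
  apply: divr_gt0; first by apply: mulr_gt0; [apply: exprn_gt0|rewrite /s]; lra.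
  rewrite /s; nra.
split.
  move=> l; rewrite in_setU1 /d' => /orP [/eqP ->|Hl]; first by rewrite eqxx.
  by rewrite ijS //; apply: dpos.
move=> {F1 F2}.
have MvE : forall (q : R) (z : 'I_m -> R) i,
    \sum_(l in S) B i l * d l * (1 * z l + q * h l) =
    \sum_(l in S) B i l * d l * z l + q * \sum_(l in S) B i l * c l.
  move=> q z i; rewrite -Hh mulr_sumr -big_split /=.
  by apply: eq_bigr => l _; ring.
have Mv'E : forall z i, Mv B (j |: S) d' z i = B i j * dl * z j + \sum_(l in S) B i l * d l * z l.
  move=> z i; rewrite /Mv big_setU1 //= /d' eqxx; congr (_ + _).
  by apply: eq_bigr => l Hl; rewrite ijS.
have KEY : forall z, let y' := (fun i => 1 * z i + dl * z j * h i) in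
  (al' * (z j ^+ 2 + nrm S z) <= Phi S r L y' + (dl * z j) ^+ 2) /\
  (Bil S r L y' (Mv B S d y') + dl * (dl * s * z j + lin S g y') * lin S kap y'
   + (dl * z j) * (dl * (dl * s * z j + lin S g y')) <= - (al' * (z j ^+ 2 + nrm S z))).
  move=> z y'.
  have HN : nrm S z <= 2 * nrm S y' + 2 * dl ^+ 2 * z j ^+ 2 * H.
    rewrite /nrm /H /y' mulr_sumr mulr_sumr -big_split /=; apply: ler_sum => i _.
    have e : z i = (1 * z i + dl * z j * h i) - dl * z j * h i by ring.
    rewrite [in X in X <= _]e.
    have := sqr_ge0 ((1 * z i + dl * z j * h i) + dl * z j * h i).
    have e2 : 2 * dl ^+ 2 * z j ^+ 2 * h i ^+ 2 = 2 * (dl * z j * h i) ^+ 2 by ring.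
    rewrite e2; nra.
  have Hs' : s < 0 by [].
  have FI := @fin_ineq R al s CK CG H E dl X be al' (nrm S y') (Phi S r L y') (Bil S r L y' (Mv B S d y')) (lin S kap y') (lin S g y') (z j) (nrm S z)
    al0 Hs' CK0 CG0 (nrm_ge0 _ _) erefl erefl erefl erefl erefl (nrm_ge0 _ _) (HP y') (HPsi y') (HCK y') (HCG y') HN.
  exact: FI.
split.
  move=> z; rewrite nrm_setU1 // HPhi; exact: (KEY z).1.
move=> z; rewrite nrm_setU1 // HBil.
have [_ K2] := KEY z; move: K2.
set y' := fun i => 1 * z i + dl * z j * h i.
have TW : Mv B (j |: S) d' z j = dl * s * z j + lin S g y'.
  rewrite Mv'E /lin /g /y'.
  rewrite MvE /s; ring.
have W : forall i, i \in S -> 1 * Mv B (j |: S) d' z i + dl * Mv B (j |: S) d' z j * h i =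
    1 * Mv B S d y' i + (dl * Mv B (j |: S) d' z j) * h i.
  move=> i Hi; rewrite Mv'E /Mv /y' MvE Hc //; ring.
rewrite (@Bil_eq _ _ _ _ _ _ _ _ W) Bil_comb HK TW.
move=> K2; apply: le_trans K2; rewrite le_eqVlt; apply/orP; left; apply/eqP; ring.
Qed.


Lemma cert0 (R : rcfType) m (B : 'M[R]_m) : Cert B set0.
Proof.
exists (fun _ => 1), 0%N, (fun _ _ => 0), 1; split => //; split => //.
split => y; rewrite /nrm /Phi /Bil big_set0 big_ord0 mulr0 ?oppr0 //.

Qed.

Lemma det_reindex (R : rcfType) m (X : 'M[R]_m) (S : {set 'I_m}) k (f : 'I_k -> 'I_m) :
  #|S| = k -> injective f -> (forall i, f i \in S) ->
  \det (psub X S) = \det (\matrix_(a, b) X (f a) (f b)).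
Proof.
move=> hk; subst k => finj fS.
pose sig := fun i => enum_rank_in (fS i) (f i).
have sigE : forall i, enum_val (sig i) = f i by move=> i; rewrite /sig enum_rankK_in.
have siginj : injective sig by move=> i1 i2 e; apply: finj; rewrite -!sigE e.
pose p := perm siginj.
have -> : \matrix_(a, b) X (f a) (f b) = row_perm p (col_perm p (psub X S)).
  by apply/matrixP => a b; rewrite !mxE /= !permE -!sigE.
rewrite row_permE col_permE !det_mulmx !det_perm odd_permV.
by rewrite mulrCA -expr2 sqrr_sign mulr1.
Qed.


Lemma schur_step (R : rcfType) m (B : 'M[R]_m) (S : {set 'I_m}) j :
  j \notin S -> \det (psub B S) != 0 ->
  \det (psub B (j |: S)) * \det (psub B S) < 0 ->
  exists c : 'I_m -> R, (forall i, i \in S -> \sum_(l in S) B i l * c l = B i j) /\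
     B j j - \sum_(l in S) B j l * c l < 0.
Proof.
move=> jS dS dS'.
pose f := fun a : 'I_#|S| => enum_val a : 'I_m.
have fS : forall a, f a \in S by move=> a; apply: enum_valP.
pose M := psub B S.
have Mu : M \in unitmx by rewrite unitmxE unitfE.
pose u : 'cV_#|S| := \col_a B (f a) j.
pose v : 'rV_#|S| := \row_b B j (f b).
pose x := invmx M *m u.
pose c := fun l => \sum_(b < #|S|) (if f b == l then x b 0 else 0).
have cE : forall a, c (f a) = x a 0.
  move=> a; rewrite /c (bigD1 a) //= eqxx big1 ?addr0 // => b /negbTE nb.
  by rewrite (inj_eq enum_val_inj) nb.
have sumE : forall i, \sum_(l in S) B i l * c l = \sum_(b < #|S|) B i (f b) * x b 0.
  by move=> i; rewrite big_enum_val; apply: eq_bigr => b _; rewrite cE.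
have Mx : M *m x = u by rewrite /x mulKVmx.
exists c; split.
  move=> i Hi; rewrite sumE.
  have -> : i = f (enum_rank_in Hi i) by rewrite /f enum_rankK_in.
  set a := enum_rank_in Hi _.
  have := congr1 (fun N : 'cV[R]_#|S| => N a 0) Mx; rewrite !mxE => e; rewrite -e.
  by rewrite /M /psub; apply: eq_bigr => b _; rewrite [_ a b]mxE.
rewrite sumE.
pose s := B j j - (v *m x) 0 0.
have sE : B j j - \sum_(b < #|S|) B j (f b) * x b 0 = s.
  by rewrite /s mxE; congr (_ - _); apply: eq_bigr => b _; rewrite [v _ _]mxE.
rewrite sE.
pose f' := fun a : 'I_(1 + #|S|) => match split a with inl _ => j | inr b => f b end.
have f'inj : injective f'.
  move=> a1 a2; rewrite -(splitK a1) -(splitK a2) /f' !unsplitK.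
  case: (split a1) => [b1|b1]; case: (split a2) => [b2|b2] //=.
  - by rewrite !ord1.
  - by move=> e; move: (fS b2); rewrite -e (negbTE jS).
  - by move=> e; move: (fS b1); rewrite e (negbTE jS).
  - by move/enum_val_inj => ->.
have f'S : forall a, f' a \in j |: S.
  move=> a; rewrite /f' in_setU1; case: (split a) => [b|b]; first by rewrite eqxx.
  by rewrite fS orbT.
have card' : #|j |: S| = (1 + #|S|)%N by rewrite cardsU1 jS.
rewrite (det_reindex B card' f'inj f'S) in dS'.
have XE : \matrix_(a, b) B (f' a) (f' b) =
   block_mx 1 (v *m invmx M) 0 1 *m block_mx (s%:M : 'M_1) 0 u M.
  rewrite mulmx_block !mul0mx !mul1mx ?mulmx0 !add0r ?addr0 mulmxKV // -mulmxA -/x.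
  apply/matrixP => a b; rewrite mxE -(splitK a) -(splitK b) /f' !unsplitK.
  case: (split a) => [a1|a1]; case: (split b) => [b1|b1] /=.
  - by rewrite block_mxEul !ord1 !mxE eqxx /s mulr1n [(v *m x) 0 0]mxE subrK.
  - by rewrite (block_mxEur (s%:M + v *m x) v u M) !mxE.
  - by rewrite block_mxEdl !mxE.
  - by rewrite block_mxEdr /M /psub !mxE.
rewrite XE det_mulmx det_ublock det_lblock !det1 !mul1r det_scalar1 in dS'.
rewrite ltNge; apply/negP => hs.
have : 0 <= s * (\det M * \det M) by apply: mulr_ge0 => //; rewrite -expr2 sqr_ge0.
lra.
Qed.


Lemma det_psub0 (R : rcfType) m (B : 'M[R]_m) : \det (psub B set0) = 1.
Proof.
have f0 : 'I_0 -> 'I_m by case => x; rewrite ltn0.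
rewrite (@det_reindex _ _ B set0 0 f0) ?cards0 ?det_mx00 //; by case.
Qed.

Lemma det_psubT (R : rcfType) m (B : 'M[R]_m) : \det (psub B setT) = \det B.
Proof.
rewrite (@det_reindex _ _ B setT m id) ?cardsT ?card_ord //; last by move=> i; rewrite in_setT.
by congr (\det _); apply/matrixP => a b; rewrite mxE.
Qed.

Lemma cert_chain (R : rcfType) m (B : 'M[R]_m) :
  PFFminus B -> Cert B setT /\ \det B != 0.
Proof.
move=> [P0 [kap [Hk Hsub]]].
pose T := fun k => if k is 0 then set0 else kap k.
have Tcard : forall k, (k <= m)%N -> #|T k| = k.
  by case=> [|k] hk; [rewrite cards0 | have [] := Hk k.+1 hk].
have Tdet : forall k, (k <= m)%N ->
    \det (psub B (T k)) != 0 /\ Num.sg (\det (psub B (T k))) = (-1) ^+ k.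
  case=> [|k] hk; first by rewrite /= det_psub0 oner_eq0 sgr1 expr0.
  have [_ nz] := Hk k.+1 hk; split => //.
  by rewrite P0 // Tcard.
have Tsub : forall k, (k < m)%N -> T k \subset T k.+1.
  by case=> [|k] hk; [rewrite sub0set | exact: (Hsub k.+2)].
have TS : forall k, (k <= m)%N -> Cert B (T k).
  elim=> [|k IH] hk; first exact: cert0.
  have hk' : (k <= m)%N by apply: ltnW.
  have [j [jT eT]] : exists j, j \notin T k /\ T k.+1 = j |: T k.
    have cD : #|T k.+1 :\: T k| == 1%N.
      by rewrite cardsDS ?Tsub // !Tcard // subSnn.
    have [j ej] := cards1P cD.
    have jD : j \in T k.+1 :\: T k by rewrite ej set11.
    exists j; split; first by move: jD; rewrite in_setD => /andP [].
    rewrite -ej setUC; apply/esym.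
    by rewrite -{2}(setID (T k.+1) (T k)) (setIidPr (Tsub k hk)).
  have [d1 s1] := Tdet k.+1 hk.
  rewrite eT in d1 s1 *.
  have [d0 s0] := Tdet k hk'.
  have neg : \det (psub B (j |: T k)) * \det (psub B (T k)) < 0.
    rewrite -sgr_lt0 sgrM s1 s0 exprS -mulrA -expr2 sqrr_sign mulr1.
    by rewrite ltrN10.
  have [c [Hc Hs]] := schur_step jT d0 neg.
  exact: cert_step jT Hc Hs (IH hk').
have Tm : T m = setT.
  by apply/eqP; rewrite eqEcard subsetT cardsT card_ord Tcard ?leqnn.
split; first by rewrite -Tm; apply: TS.
by have [] := Tdet m (leqnn m); rewrite Tm det_psubT.
Qed.


Lemma ReD (R : rcfType) (x y : R[i]) : complex.Re (x + y) = complex.Re x + complex.Re y.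
Proof. by case: x; case: y. Qed.
Lemma ImD (R : rcfType) (x y : R[i]) : complex.Im (x + y) = complex.Im x + complex.Im y.
Proof. by case: x; case: y. Qed.
Lemma Re0 (R : rcfType) : complex.Re (0 : R[i]) = 0. Proof. by []. Qed.
Lemma Im0 (R : rcfType) : complex.Im (0 : R[i]) = 0. Proof. by []. Qed.
Lemma ReMr (R : rcfType) (x : R[i]) (k : R) : complex.Re (x * (k%:C)%C) = complex.Re x * k.
Proof. by case: x => a b /=; rewrite mulr0 subr0. Qed.
Lemma ImMr (R : rcfType) (x : R[i]) (k : R) : complex.Im (x * (k%:C)%C) = complex.Im x * k.
Proof. by case: x => a b /=; rewrite mulr0 add0r. Qed.
Lemma ReM (R : rcfType) (x y : R[i]) :
  complex.Re (x * y) = complex.Re x * complex.Re y - complex.Im x * complex.Im y.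
Proof. by case: x; case: y. Qed.
Lemma ImM (R : rcfType) (x y : R[i]) :
  complex.Im (x * y) = complex.Re x * complex.Im y + complex.Im x * complex.Re y.
Proof. by case: x; case: y => /= *; ring. Qed.
Lemma Re_sum (R : rcfType) (I : finType) (F : I -> R[i]) :
  complex.Re (\sum_i F i) = \sum_i complex.Re (F i).
Proof. exact: (big_morph _ (@ReD R) (Re0 R)). Qed.
Lemma Im_sum (R : rcfType) (I : finType) (F : I -> R[i]) :
  complex.Im (\sum_i F i) = \sum_i complex.Im (F i).
Proof. exact: (big_morph _ (@ImD R) (Im0 R)). Qed.

Lemma char_poly_tr (F : fieldType) n (A : 'M[F]_n) : char_poly A^T = char_poly A.
Proof.
rewrite /char_poly -det_tr; congr (\det _).
by apply/matrixP => a b; rewrite /char_poly_mx !mxE eq_sym.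
Qed.

Lemma eigseqP (R : rcfType) m (M : 'M[R[i]]_m) z :
  (z \in eigseq M) = root (char_poly M) z.
Proof.
rewrite /eigseq; case: closed_field_poly_normal => s /= e.
rewrite [in RHS]e rootZ ?root_prod_XsubC //.
by rewrite (monicP (char_poly_monic M)) oner_eq0.
Qed.

Lemma cert_stable (R : rcfType) m (B : 'M[R]_m) (d : 'I_m -> R) r L (al : R) :
  0 < al -> (forall y, al * nrm setT y <= Phi setT r L y) ->
  (forall y, Bil setT r L y (Mv B setT d y) <= - (al * nrm setT y)) ->
  forall z, eigenvalue (cmx (B *m diag_mx (\row_i d i))) z -> complex.Re z < 0.
Proof.
move=> al0 HP HPsi z.
set N := B *m diag_mx _.
rewrite eigenvalue_root_char -char_poly_tr -eigenvalue_root_char.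
move/eigenvalueP => [v vE vnz].
pose y := fun l => complex.Re (v 0 l).
pose w := fun l => complex.Im (v 0 l).
have NE : forall i l, N i l = B i l * d l by move=> i l; rewrite /N mul_mx_diag !mxE.
have Ei : forall i, \sum_l v 0 l * ((N i l)%:C)%C = z * v 0 i.
  move=> i; have := congr1 (fun M : 'rV[R[i]]_m => M 0 i) vE; rewrite !mxE => <-.
  by apply: eq_bigr => l _; rewrite !mxE.
have MvE : forall x i, Mv B setT d x i = \sum_l x l * N i l.
  move=> x i; rewrite /Mv (eq_bigl xpredT) ?big_mkcond //=; last by move=> l; rewrite in_setT.
  by apply: eq_bigr => l _; rewrite NE; ring.
have ReE : forall i, Mv B setT d y i = complex.Re z * y i + (- complex.Im z) * w i.
  move=> i; rewrite MvE /y /w mulNr; have := congr1 (@complex.Re R) (Ei i).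
  rewrite Re_sum ReM => <-.
  by apply: eq_bigr => l _; rewrite ReMr.
have ImE : forall i, Mv B setT d w i = complex.Im z * y i + complex.Re z * w i.
  move=> i; rewrite MvE /y /w; have := congr1 (@complex.Im R) (Ei i).
  rewrite Im_sum ImM => e; rewrite addrC -e.
  by apply: eq_bigr => l _; rewrite ImMr.
have hy := HPsi y.
rewrite (@Bil_eq _ _ _ _ _ _ _ (fun i => complex.Re z * y i + (- complex.Im z) * w i)) in hy;
  last by move=> i _; apply: ReE.
rewrite Bil_comb Bil_Phi in hy.
have hw := HPsi w.
rewrite (@Bil_eq _ _ _ _ _ _ _ (fun i => complex.Im z * y i + complex.Re z * w i)) in hw;
  last by move=> i _; apply: ImE.
rewrite Bil_comb Bil_Phi Bil_sym in hw.
have py := HP y; have pw := HP w.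
have npos : 0 < nrm setT y + nrm setT w.
  have [l vl] : exists l, v 0 l != 0.
    apply/existsP; move: vnz; apply: contraR; rewrite negb_exists => /forallP H.
    by apply/eqP/matrixP => a b; rewrite !ord1 mxE; apply/eqP; rewrite -[_ == _]negbK H.
  have yw : 0 < y l ^+ 2 + w l ^+ 2.
    have : y l != 0 \/ w l != 0.
      move: vl; rewrite /y /w; case: (v 0 l) => a b.
      by rewrite eq_complex negb_and => /orP [] ->; [left|right].
    case=> H.
      have : 0 < y l ^+ 2 by rewrite exprn_even_gt0.
      have := sqr_ge0 (w l); lra.
    have : 0 < w l ^+ 2 by rewrite exprn_even_gt0.
    have := sqr_ge0 (y l); lra.
  rewrite /nrm -big_split /= (bigD1 l) ?in_setT //=.
  have : 0 <= \sum_(i in setT | i != l) (y i ^+ 2 + w i ^+ 2).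
    by apply: sumr_ge0 => i _; apply: addr_ge0; apply: sqr_ge0.
  lra.
rewrite ltNge; apply/negP => a0.
have : 0 <= complex.Re z * (Phi setT r L y + Phi setT r L w).
  by apply: mulr_ge0 => //; have := mulr_gt0 al0 npos; lra.
have := mulr_gt0 al0 npos.
lra.
Qed.

Unset Implicit Arguments.

Theorem mainTheorem6 (R : rcfType) (n : nat) (A : 'M[R]_n) (kappa : {set 'I_n}) :
  PFFminus (psub A kappa) -> hurwitz_unstable (psub A kappa) -> DHopf A.
Proof.
move=> HF [z [ez Rz]].
have [[d [r [L [al [al0 [dpos [HP HPsi]]]]]]] dB] := cert_chain HF.
exists kappa; split; first exact: dB.
exists (\row_i d i), (const_mx 1); split.
  by move=> i; rewrite mxE; apply: dpos; rewrite in_setT.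
split; first by move=> i; rewrite mxE ltr01.
rewrite diag_const_mx mulmx1 => e.
have h1 : (inertia (psub A kappa *m diag_mx (\row_i d i))).1.2 = 0%N.
  rewrite /inertia /=; apply/eqP; rewrite -leqn0 leqNgt -has_count; apply/hasPn => x.
  rewrite eigseqP -eigenvalue_root_char => ex; rewrite -leNgt; apply/ltW.
  exact: (@cert_stable R #|kappa| (psub A kappa) d r L al al0 HP HPsi x ex).
have h2 : (0 < (inertia (psub A kappa)).1.2)%N.
  rewrite /inertia /= -has_count; apply/hasP; exists z => //.
  by rewrite eigseqP -eigenvalue_root_char.
by rewrite -e h1 in h2.
Qed.
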